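(* Let $n\geq1$. Let $s$ be defined on the generators of $P_n(\mathbb{K})$ by $s(a_i)=a_i$, $s(b_i)=b_i$ for $1\leq i\leq n-1$; $s(C_{i,j})=C_{i,j}$ for $1\leq i<j\leq n-1$; $s(C_{i,n})=C_{i,n}C_{i,n+1}C_{n,n+1}^{-1}$ for $1\leq i\leq n-1$; $s(a_n)=a_na_{n+1}$; $s(b_n)=b_{n+1}b_n$ (images in $P_{n+1}(\mathbb{K})$). Then $s$ extends to a homomorphism $s\colon P_n(\mathbb{K})\to P_{n+1}(\mathbb{K})$ with $p_*\circ s=\mathrm{id}$, where $p_*\colon P_{n+1}(\mathbb{K})\to P_n(\mathbb{K})$ is the homomorphism forgetting the last string; hence $s$ is a section of the Fadell–Neuwirth short exact sequence $1\to\pi_1(\mathbb{K}\setminus\{x_1,\ldots,x_n\})\to P_{n+1}(\mathbb{K})\xrightarrow{p_*}P_n(\mathbb{K})\to1$.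
   Context: $\mathbb{K}$ is the Klein bottle and $P_m(\mathbb{K})$ its $m$-string pure braid group, which has the presentation: generators $a_i,b_i$ ($1\leq i\leq m$), $C_{i,j}$ ($1\leq i<j\leq m$), with the convention $C_{i,i}=1$; relations (all indices in $\{1,\ldots,m\}$): (1) $a_ia_j=a_ja_i$ ($i<j$); (2) $a_i^{-1}b_ja_i=b_ja_jC_{i,j}^{-1}C_{i+1,j}a_j^{-1}$ ($i<j$); (3) $a_i^{-1}C_{j,k}a_i=C_{j,k}$ if $i<j<k$ or $j<k<i$, and $=a_kC_{i+1,k}^{-1}C_{i,k}a_k^{-1}C_{j,k}C_{i,k}^{-1}C_{i+1,k}$ if $j\leq i<k$; (4) $C_{i,l}^{-1}C_{j,k}C_{i,l}=C_{j,k}$ if $i<l<j<k$ or $j\leq i<l<k$, and $=C_{i,k}C_{l+1,k}^{-1}C_{l,k}C_{i,k}^{-1}C_{j,k}C_{l,k}^{-1}C_{l+1,k}$ if $i<j\leq l<k$; (5) $\prod_{j=i+1}^{m}C_{i,j}C_{i+1,j}^{-1}=b_iC_{1,i}a_i^{-1}b_i^{-1}a_i^{-1}$ ($1\leq i\leq m$); (6) $b_jb_i=b_ib_jC_{i,j}C_{i+1,j}^{-1}$ ($i<j$); (7) $b_i^{-1}a_jb_i=a_jb_j(C_{i,j}C_{i+1,j}^{-1})^{-1}b_j^{-1}$ ($i<j$); (8) $b_i^{-1}C_{j,k}b_i=C_{j,k}$ if $i<j<k$ or $j<k<i$, and $=C_{i+1,k}C_{i,k}^{-1}C_{j,k}b_k(C_{i,k}C_{i+1,k}^{-1})^{-1}b_k^{-1}$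 if $j\leq i<k$. Here $a_i$ (resp. $b_i$) moves only the $i$-th point once across one (resp. the other) side of the square model of $\mathbb{K}$, and $C_{i,j}$ moves only the $j$-th point around the points $i,\ldots,j-1$. The homomorphism $p_*$ is given on generators of $P_{n+1}(\mathbb{K})$ by $a_{n+1},b_{n+1},C_{i,n+1}\mapsto1$ and fixing all other generators. *)

(* Defs.v *)
From mathcomp Require Import all_boot.
Set Implicit Arguments. Unset Strict Implicit. Unset Printing Implicit Defensive.

Inductive letter : Type := La of nat | Lb of nat | LC of nat & nat.

(* A word in the free group: a list of (letter, inverted?) pairs. *)
Definition word := seq (letter * bool).

Definition winv (w : word) : word := rev (map (fun p => (p.1, ~~ p.2)) w).

Definition a (i : nat) : word := [:: (La i, false)].
Definition b (i : nat) : word := [:: (Lb i, false)].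
(* C_{i,j}, with the convention C_{i,i} = 1. *)
Definition C (i j : nat) : word := if i == j then [::] else [:: (LC i j, false)].

Definition valid_letter (m : nat) (x : letter) : bool :=
  match x with
  | La i => (1 <= i <= m)
  | Lb i => (1 <= i <= m)
  | LC i j => [&& 1 <= i, i < j & j <= m]
  end.
Definition valid_word (m : nat) (w : word) : bool :=
  all (fun p => valid_letter m p.1) w.

Inductive prel (m : nat) : word -> word -> Prop :=
| R1 i j : 1 <= i -> i < j -> j <= m ->
    prel m (a i ++ a j) (a j ++ a i)
| R2 i j : 1 <= i -> i < j -> j <= m ->
    prel m (winv (a i) ++ b j ++ a i)
           (b j ++ a j ++ winv (C i j) ++ C i.+1 j ++ winv (a j))
| R3a i j k : 1 <= i <= m -> 1 <= j -> j < k -> k <= m ->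
    ((i < j < k) || (k < i)) ->
    prel m (winv (a i) ++ C j k ++ a i) (C j k)
| R3b i j k : 1 <= j -> j <= i -> i < k -> k <= m ->
    prel m (winv (a i) ++ C j k ++ a i)
           (a k ++ winv (C i.+1 k) ++ C i k ++ winv (a k) ++ C j k
                ++ winv (C i k) ++ C i.+1 k)
| R4a i l j k : 1 <= i -> i < l -> 1 <= j -> j < k -> k <= m ->
    ((l < j) || ((j <= i) && (l < k))) ->
    prel m (winv (C i l) ++ C j k ++ C i l) (C j k)
| R4b i l j k : 1 <= i -> i < j -> j <= l -> l < k -> k <= m ->
    prel m (winv (C i l) ++ C j k ++ C i l)
           (C i k ++ winv (C l.+1 k) ++ C l k ++ winv (C i k) ++ C j k
                ++ winv (C l k) ++ C l.+1 k)
| R5 i : 1 <= i <= m ->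
    prel m (flatten [seq C i j ++ winv (C i.+1 j) | j <- iota i.+1 (m - i)])
           (b i ++ C 1 i ++ winv (a i) ++ winv (b i) ++ winv (a i))
| R6 i j : 1 <= i -> i < j -> j <= m ->
    prel m (b j ++ b i) (b i ++ b j ++ C i j ++ winv (C i.+1 j))
| R7 i j : 1 <= i -> i < j -> j <= m ->
    prel m (winv (b i) ++ a j ++ b i)
           (a j ++ b j ++ winv (C i j ++ winv (C i.+1 j)) ++ winv (b j))
| R8a i j k : 1 <= i <= m -> 1 <= j -> j < k -> k <= m ->
    ((i < j < k) || (k < i)) ->
    prel m (winv (b i) ++ C j k ++ b i) (C j k)
| R8b i j k : 1 <= j -> j <= i -> i < k -> k <= m ->
    prel m (winv (b i) ++ C j k ++ b i)
           (C i.+1 k ++ winv (C i k) ++ C j k ++ b k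
                ++ winv (C i k ++ winv (C i.+1 k)) ++ winv (b k)).

Inductive eqv (m : nat) : word -> word -> Prop :=
| eqv_refl w : eqv m w w
| eqv_sym w w' : eqv m w w' -> eqv m w' w
| eqv_trans w1 w2 w3 : eqv m w1 w2 -> eqv m w2 w3 -> eqv m w1 w3
| eqv_ctx u v w w' : eqv m w w' -> eqv m (u ++ w ++ v) (u ++ w' ++ v)
| eqv_cancel x e : eqv m [:: (x, e); (x, ~~ e)] [::]
| eqv_rel w w' : prel m w w' -> eqv m w w'.

Definition wmap (f : letter -> word) (w : word) : word :=
  flatten [seq if p.2 then winv (f p.1) else f p.1 | p <- w].

Definition s_letter (n : nat) (x : letter) : word :=
  match x with
  | La i => if i == n then a n ++ a n.+1 else a i
  | Lb i => if i == n then b n.+1 ++ b n else b i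
  | LC i j => if j == n then C i n ++ C i n.+1 ++ winv (C n n.+1) else C i j
  end.

Definition p_letter (n : nat) (x : letter) : word :=
  match x with
  | La i => if i == n.+1 then [::] else a i
  | Lb i => if i == n.+1 then [::] else b i
  | LC i j => if j == n.+1 then [::] else C i j
  end.

Definition s_word (n : nat) := wmap (s_letter n).
Definition p_word (n : nat) := wmap (p_letter n).

(* Main.v *)
Require Import Defs.
From mathcomp Require Import all_boot.
From mathcomp Require Import zify.
From Stdlib Require Import Setoid Morphisms.
Set Implicit Arguments. Unset Strict Implicit. Unset Printing Implicit Defensive.

Section Eqv.
Variable m : nat.
Local Notation E := (eqv m).

#[local] Instance eqv_equiv : Equivalence E.
Proof. split; [exact: eqv_refl | exact: eqv_sym | exact: eqv_trans]. Qed.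

Lemma eqv_catl u v v' : E v v' -> E (u ++ v) (u ++ v').
Proof. by move=> H; have := eqv_ctx u [::] H; rewrite !cats0. Qed.
Lemma eqv_catr u u' v : E u u' -> E (u ++ v) (u' ++ v).
Proof. by move=> H; have := eqv_ctx [::] v H. Qed.
Lemma eqv_cat u u' v v' : E u u' -> E v v' -> E (u ++ v) (u' ++ v').
Proof. move=> H1 H2; apply: eqv_trans (eqv_catr _ H1) (eqv_catl _ H2). Qed.

Lemma winv_cat u v : winv (u ++ v) = winv v ++ winv u.
Proof. by rewrite /winv map_cat rev_cat. Qed.
Lemma winvK w : winv (winv w) = w.
Proof. rewrite /winv map_rev revK -map_comp. elim: w => [|[x e] w IH] //=. by rewrite negbK IH. Qed.
Lemma winv_cons x w : winv (x :: w) = winv w ++ [:: (x.1, ~~ x.2)].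
Proof. by rewrite /winv /= rev_cons -cats1. Qed.
Lemma winv_nil : winv [::] = [::]. Proof. by []. Qed.

Lemma eqv_invr w : E (w ++ winv w) [::].
Proof.
elim: w => [|[x e] w IH] //=; first exact: eqv_refl.
rewrite winv_cons /= catA.
apply: eqv_trans (eqv_catr _ (eqv_catl [:: (x,e)] IH)) _ => /=.
exact: eqv_cancel.
Qed.
Lemma eqv_invl w : E (winv w ++ w) [::].
Proof. by have := eqv_invr (winv w); rewrite winvK. Qed.

Lemma eqv_cancel_mid u w v : E (u ++ w ++ winv w ++ v) (u ++ v).
Proof. apply: eqv_catl; rewrite catA; exact: (eqv_catr _ (eqv_invr w)). Qed.

Lemma eqv_winv w w' : E w w' -> E (winv w) (winv w').
Proof.
move=> H. apply: eqv_trans (_ : E _ (winv w ++ w' ++ winv w')) _.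
  apply: eqv_sym; rewrite -[X in E _ X]cats0; apply: eqv_catl; exact: eqv_invr.
apply: eqv_trans (_ : E _ (winv w ++ w ++ winv w')) _.
  by apply: eqv_catl; apply: eqv_catr; apply: eqv_sym.
rewrite catA; apply: eqv_trans (eqv_catr _ (eqv_invl w)) _; exact: eqv_refl.
Qed.

Lemma conj_push x g y : E (winv g ++ x ++ g) y -> E (x ++ g) (g ++ y).
Proof.
move=> H; apply: eqv_trans (_ : E _ (g ++ winv g ++ x ++ g)) _.
  by rewrite catA; apply: eqv_sym; rewrite -[X in E _ X]cat0s; apply: eqv_catr; exact: eqv_invr.
exact: eqv_catl.
Qed.

Lemma push_inv x g y : E (x ++ g) (g ++ y) -> E (winv x ++ g) (g ++ winv y).
Proof.
move=> H.
apply: eqv_trans (_ : E _ (winv x ++ (g ++ y) ++ winv y)) _.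
  apply: eqv_catl; rewrite -catA -[X in E X _]cats0; apply: eqv_catl; apply: eqv_sym; exact: eqv_invr.
apply: eqv_trans (_ : E _ (winv x ++ (x ++ g) ++ winv y)) _.
  by apply: eqv_catl; apply: eqv_catr; apply: eqv_sym.
rewrite -catA catA.
apply: eqv_trans (eqv_catr _ (eqv_invl x)) _; exact: eqv_refl.
Qed.

Lemma push_back x g y : E (x ++ g) (g ++ y) -> E (y ++ winv g) (winv g ++ x).
Proof.
move=> H.
apply: eqv_trans (_ : E _ (winv g ++ (g ++ y) ++ winv g)) _.
  rewrite catA; apply: eqv_catr; apply: eqv_sym; rewrite catA; exact: (eqv_catr _ (eqv_invl g)).
apply: eqv_trans (_ : E _ (winv g ++ (x ++ g) ++ winv g)) _.
  by apply: eqv_catl; apply: eqv_catr; apply: eqv_sym.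
rewrite -catA; apply: eqv_catl; rewrite -[X in E _ X]cats0; apply: eqv_catl; exact: eqv_invr.
Qed.

End Eqv.

Lemma wmap_cat f u v : wmap f (u ++ v) = wmap f u ++ wmap f v.
Proof. by rewrite /wmap map_cat flatten_cat. Qed.
Lemma wmap_nil f : wmap f [::] = [::]. Proof. by []. Qed.
Lemma wmap_cons f x w : wmap f (x :: w) = (if x.2 then winv (f x.1) else f x.1) ++ wmap f w.
Proof. by []. Qed.

Lemma wmap_winv f w : wmap f (winv w) = winv (wmap f w).
Proof.
elim: w => [|[x e] w IH] //.
rewrite winv_cons wmap_cat IH wmap_cons winv_cat /= /wmap /= cats0.
by case: e => //=; rewrite winvK.
Qed.

Lemma wmap_flatten f (s : seq word) : wmap f (flatten s) = flatten (map (wmap f) s).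
Proof. by elim: s => [|u s IH] //=; rewrite wmap_cat IH. Qed.

Lemma wmap_comp f g w : wmap g (wmap f w) = wmap (fun x => wmap g (f x)) w.
Proof.
elim: w => [|[x e] w IH] //.
rewrite !wmap_cons wmap_cat IH /=. by case: e; rewrite ?wmap_winv.
Qed.

Lemma eqv_wmap_cancel m f x e : eqv m (wmap f [:: (x, e); (x, ~~ e)]) [::].
Proof.
rewrite /wmap /= cats0. case: e => /=.
- by have := eqv_invr m (winv (f x)); rewrite winvK.
- exact: eqv_invr.
Qed.

Lemma C_ne i j : i != j -> C i j = [:: (LC i j, false)].
Proof. by rewrite /C => /negbTE ->. Qed.
Lemma C_eq i : C i i = [::].
Proof. by rewrite /C eqxx. Qed.

Lemma ps_letter n x : valid_letter n x -> wmap (p_letter n) (s_letter n x) = [:: (x, false)].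
Proof.
case: x => [i|i|i j] /=.
- move=> /andP [h1 h2]. case: eqP => [->|ne] /=.
  + by rewrite /wmap /= (_ : (n == n.+1) = false) ?eqxx //; lia.
  + by rewrite /wmap /= (_ : (i == n.+1) = false) //; lia.
- move=> /andP [h1 h2]. case: eqP => [->|ne] /=.
  + by rewrite /wmap /= (_ : (n == n.+1) = false) ?eqxx //; lia.
  + by rewrite /wmap /= (_ : (i == n.+1) = false) //; lia.
- move=> /and3P [h1 h2 h3]. case: eqP => [->|ne] /=.
  + rewrite (C_ne (_ : i != n)); last by lia.
    rewrite (C_ne (_ : i != n.+1)); last by lia.
    rewrite (C_ne (_ : n != n.+1)); last by lia.
    rewrite /wmap /= (_ : (n == n.+1) = false); last by lia.
    by rewrite eqxx /= C_ne //; lia.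
  + rewrite C_ne; last by lia.
    rewrite /wmap /= (_ : (j == n.+1) = false); last by lia.
    by rewrite C_ne //; lia.
Qed.

Lemma part2 n w : valid_word n w -> eqv n (p_word n (s_word n w)) w.
Proof.
move=> Hv. rewrite /p_word /s_word wmap_comp.
suff -> : wmap (fun x => wmap (p_letter n) (s_letter n x)) w = w by exact: eqv_refl.
elim: w Hv => [|[x e] w IH] //= /andP [hx hw].
rewrite wmap_cons IH // ps_letter //. by case: e.
Qed.

(* Concrete push lemmas in P_m: x g = g phi_g(x) for x a generator with top index m *)
Section Conc.
Variable m : nat.
Local Notation E := (eqv m).

Lemma cP_aA i : 1 <= i -> i < m -> E (a m ++ a i) (a i ++ a m).
Proof. move=> h1 h2; apply: eqv_sym; apply: eqv_rel; apply: R1 => //. Qed.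

Lemma cP_aB i : 1 <= i -> i < m ->
  E (b m ++ a i) (a i ++ (b m ++ a m ++ winv (C i m) ++ C i.+1 m ++ winv (a m))).
Proof. move=> h1 h2; apply: conj_push; apply: eqv_rel; apply: R2 => //. Qed.

Lemma cP_aC1 i j : 1 <= i -> i < j -> j < m -> E (C j m ++ a i) (a i ++ C j m).
Proof. move=> h1 h2 h3; apply: conj_push; apply: eqv_rel; apply: R3a; lia. Qed.

Lemma cP_aC2 i j : 1 <= j -> j <= i -> i < m ->
  E (C j m ++ a i) (a i ++ (a m ++ winv (C i.+1 m) ++ C i m ++ winv (a m) ++ C j m
                ++ winv (C i m) ++ C i.+1 m)).
Proof. move=> h1 h2 h3; apply: conj_push; apply: eqv_rel; apply: R3b; lia. Qed.

Lemma cP_bA i : 1 <= i -> i < m ->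
  E (a m ++ b i) (b i ++ (a m ++ b m ++ winv (C i m ++ winv (C i.+1 m)) ++ winv (b m))).
Proof. move=> h1 h2; apply: conj_push; apply: eqv_rel; apply: R7 => //. Qed.

Lemma cP_bB i : 1 <= i -> i < m ->
  E (b m ++ b i) (b i ++ (b m ++ C i m ++ winv (C i.+1 m))).
Proof. move=> h1 h2; apply: eqv_rel; apply: R6 => //. Qed.

Lemma cP_bC1 i j : 1 <= i -> i < j -> j < m -> E (C j m ++ b i) (b i ++ C j m).
Proof. move=> h1 h2 h3; apply: conj_push; apply: eqv_rel; apply: R8a; lia. Qed.

Lemma cP_bC2 i j : 1 <= j -> j <= i -> i < m ->
  E (C j m ++ b i) (b i ++ (C i.+1 m ++ winv (C i m) ++ C j m ++ b m
                ++ winv (C i m ++ winv (C i.+1 m)) ++ winv (b m))).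
Proof. move=> h1 h2 h3; apply: conj_push; apply: eqv_rel; apply: R8b; lia. Qed.

Lemma cP_CA p q : 1 <= p -> p < q -> q < m -> E (a m ++ C p q) (C p q ++ a m).
Proof.
move=> h1 h2 h3; apply: eqv_sym; apply: conj_push; apply: eqv_rel; apply: R3a; lia.
Qed.

Lemma cP_CB p q : 1 <= p -> p < q -> q < m -> E (b m ++ C p q) (C p q ++ b m).
Proof.
move=> h1 h2 h3; apply: eqv_sym; apply: conj_push; apply: eqv_rel; apply: R8a; lia.
Qed.

Lemma cP_CC1 p q j : 1 <= p -> p < q -> q < m -> 1 <= j -> j < m -> (q < j) || (j <= p) ->
  E (C j m ++ C p q) (C p q ++ C j m).
Proof.
move=> h1 h2 h3 h4 h5 h6; apply: conj_push; apply: eqv_rel; apply: R4a; lia.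
Qed.

Lemma cP_CC2 p q j : 1 <= p -> p < j -> j <= q -> q < m ->
  E (C j m ++ C p q) (C p q ++ (C p m ++ winv (C q.+1 m) ++ C q m ++ winv (C p m) ++ C j m
                ++ winv (C q m) ++ C q.+1 m)).
Proof.
move=> h1 h2 h3 h4; apply: conj_push; apply: eqv_rel; apply: R4b; lia.
Qed.
End Conc.

Definition alet := (nat * nat * nat)%type.
Definition aword := seq (alet * bool).
Definition AA p : alet := (0, p, 0).
Definition AB p : alet := (1, p, 0).
Definition AC p q : alet := (2, p, q).
Definition aa p : aword := [:: (AA p, false)].
Definition ab p : aword := [:: (AB p, false)].
Definition aC p q : aword := if p == q then [::] else [:: (AC p q, false)].
Definition awinv (w : aword) : aword := rev (map (fun p => (p.1, ~~ p.2)) w).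
Definition wmapA (f : alet -> aword) (w : aword) : aword :=
  flatten [seq if p.2 then awinv (f p.1) else f p.1 | p <- w].

Definition phiA (T : nat) (g x : alet) : aword :=
  let: (kg, i, q) := g in let: (kx, j, _) := x in
  match kg with
  | 0 => match kx with
         | 0 => aa T
         | 1 => ab T ++ aa T ++ awinv (aC i T) ++ aC i.+1 T ++ awinv (aa T)
         | _ => if i < j then aC j T else
                aa T ++ awinv (aC i.+1 T) ++ aC i T ++ awinv (aa T) ++ aC j T
                ++ awinv (aC i T) ++ aC i.+1 T
         end
  | 1 => match kx with
         | 0 => aa T ++ ab T ++ awinv (aC i T ++ awinv (aC i.+1 T)) ++ awinv (ab T)
         | 1 => ab T ++ aC i T ++ awinv (aC i.+1 T)
         | _ => if i < j then aC j T else
                aC i.+1 T ++ awinv (aC i T) ++ aC j T ++ ab T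
                ++ awinv (aC i T ++ awinv (aC i.+1 T)) ++ awinv (ab T)
         end
  | _ => match kx with
         | 0 => aa T
         | 1 => ab T
         | _ => if (q < j) || (j <= i) then aC j T else
                aC i T ++ awinv (aC q.+1 T) ++ aC q T ++ awinv (aC i T) ++ aC j T
                ++ awinv (aC q T) ++ aC q.+1 T
         end
  end.

Definition psiA (T : nat) (g x : alet) : aword :=
  let: (kg, i, q) := g in let: (kx, j, _) := x in
  match kg with
  | 0 => let E := aC i T ++ awinv (aC i.+1 T) in
         match kx with
         | 0 => aa T
         | 1 => ab T ++ E
         | _ => if i < j then aC j T else
                awinv E ++ aC j T ++ awinv (aa T) ++ E ++ aa T
         end
  | 1 => match kx with
         | 0 => aa T ++ awinv (aC i T) ++ aC i.+1 T
         | 1 => awinv (aC i.+1 T) ++ aC i T ++ ab T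
         | _ => if i < j then aC j T else
                awinv (ab T) ++ awinv (aC i T) ++ aC i.+1 T ++ ab T ++ aC j T
                ++ awinv (aC i T) ++ aC i.+1 T
         end
  | _ => let Q := aC q T ++ awinv (aC q.+1 T) in
         match kx with
         | 0 => aa T
         | 1 => ab T
         | _ => if (q < j) || (j <= i) then aC j T else
                awinv Q ++ aC j T ++ awinv (aC i T) ++ Q ++ aC i T
         end
  end.

Definition needadj (g x : alet) : bool :=
  let: (kg, i, q) := g in let: (kx, j, _) := x in
  match kg with
  | 0 => match kx with 0 => false | _ => true end
  | 1 => true
  | _ => match kx with 0 | 1 => false | _ => (i < j) && (j <= q) end
  end.
Definition adjpos (g : alet) : nat :=
  let: (kg, i, q) := g in match kg with 0 | 1 => i | _ => q end.

Definition Fok (T : nat) (x : alet) : bool :=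
  let: (kx, j, r) := x in
  match kx with 0 | 1 => j == T | _ => (r == T) && (j < T) end.
Definition Pok (T : nat) (x : alet) : bool :=
  let: (k, i, q) := x in
  match k with 0 | 1 => i < T | _ => (i < q) && (q < T) end.

Section Ev.
Variable ix : seq nat.
Definition ev p := nth 0 ix p.
Definition evL (x : alet) : letter :=
  match x.1.1 with 0 => La (ev x.1.2) | 1 => Lb (ev x.1.2) | _ => LC (ev x.1.2) (ev x.2) end.
Definition evw (w : aword) : word := [seq (evL p.1, p.2) | p <- w].

Lemma evw_cat u v : evw (u ++ v) = evw u ++ evw v.
Proof. by rewrite /evw map_cat. Qed.
Lemma evw_awinv w : evw (awinv w) = winv (evw w).
Proof. by rewrite /evw /awinv /winv map_rev -!map_comp. Qed.
Lemma evw_aa p : evw (aa p) = a (ev p). Proof. by []. Qed.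
Lemma evw_ab p : evw (ab p) = b (ev p). Proof. by []. Qed.

Hypothesis Hs : sorted ltn ix.
Lemma ev_lt p q : p < q -> q < size ix -> ev p < ev q.
Proof.
move=> h1 h2. have := sorted_ltn_nth ltn_trans 0 Hs. move=> /(_ p q).
rewrite !inE; apply => //; lia.
Qed.
Lemma ev_le p q : p <= q -> q < size ix -> ev p <= ev q.
Proof. rewrite leq_eqVlt => /orP [/eqP -> //|h1] h2. by have := ev_lt h1 h2; lia. Qed.
Lemma ev_eq p q : p < size ix -> q < size ix -> (ev p == ev q) = (p == q).
Proof.
move=> h1 h2. case: (ltngtP p q) => [h|h|->]; last by rewrite !eqxx.
- by have := ev_lt h h2; lia.
- by have := ev_lt h h1; lia.
Qed.
Lemma evw_aC p q : p < size ix -> q < size ix -> evw (aC p q) = C (ev p) (ev q).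
Proof. move=> h1 h2. by rewrite /aC /C ev_eq //; case: (p == q). Qed.

Lemma evw_wmapA (Q : pred alet) f g w :
  (forall x, Q x -> evw (f x) = g (evL x)) -> all (fun p => Q p.1) w ->
  evw (wmapA f w) = wmap g (evw w).
Proof.
move=> H. elim: w => [|[x e] w IH] //= /andP [hx hw].
rewrite /wmapA /= evw_cat wmap_cons -IH //; congr (_ ++ _).
case: e => //=; by rewrite ?evw_awinv H.
Qed.
End Ev.
Notation evI := ev (only parsing).

Section Push.
Variable ix : seq nat.
Hypothesis Hs : sorted ltn ix.
Hypothesis Hh : 0 < nth 0 ix 0.
Hypothesis HS : 1 < size ix.
Local Notation T := (size ix).-1.
Local Notation ev := (ev ix).
Local Notation evw := (evw ix).
Local Notation m := (ev T).
Definition adjP p := p.+1 < size ix /\ ev p.+1 = (ev p).+1.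

Lemma T_lt : T < size ix. Proof. lia. Qed.
Lemma ev_pos p : p < size ix -> 1 <= ev p.
Proof. move=> h. have := ev_le Hs (_ : 0 <= p) h. rewrite /evI. lia. Qed.
Lemma ev_ltT p : p < T -> ev p < m.
Proof. move=> h. apply: ev_lt => //; lia. Qed.

Lemma evw1C k j r : r = T -> j < T -> evw [:: ((k.+2, j, r), false)] = C (ev j) m.
Proof. move=> -> h. rewrite C_ne //. have := ev_ltT h. lia. Qed.
Lemma evw1Cg k i q : i < q -> q < T -> evw [:: ((k.+2, i, q), false)] = C (ev i) (ev q).
Proof. move=> h1 h2. rewrite C_ne //. have := ev_lt Hs h1 (_ : q < size ix). lia. Qed.

Lemma evw1A p z : evw [:: ((0, p, z), false)] = a (ev p). Proof. by []. Qed.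
Lemma evw1B p z : evw [:: ((1, p, z), false)] = b (ev p). Proof. by []. Qed.

Lemma pushA g x : Pok T g -> Fok T x -> (needadj g x -> adjP (adjpos g)) ->
  eqv m (evw [:: (x, false); (g, false)]) (evw ((g, false) :: phiA T g x)).
Proof.
have hT := T_lt.
case: g => [[kg i] q]; case: x => [[kx j] r].
rewrite -[[:: _; _]]/([:: _] ++ [:: _]) -[_ :: phiA _ _ _]/([:: _] ++ phiA _ _ _).
rewrite !evw_cat.
Ltac ev_rw := rewrite !(evw_cat, evw_awinv, evw_aa, evw_ab, evw_aC) //; try lia.
case: kg => [|[|kg]].
-
  rewrite /Pok; cbv beta iota; rewrite evw1A => hi. have hi1 : 1 <= ev i by apply: ev_pos; lia.
  have hiT := ev_ltT hi.
  case: kx => [|[|kx]]; rewrite /Fok /phiA /needadj /adjpos; cbv beta iota.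
  + move=> /eqP -> _. rewrite evw1A evw_aa. exact: cP_aA.
  + move=> /eqP -> /(_ isT) [ha he]. rewrite evw1B. ev_rw. rewrite he.
    exact: cP_aB.
  + move=> /andP [/eqP hr hj] hadj. rewrite evw1C //.
    have hj1 : 1 <= ev j by apply: ev_pos; lia.
    case: ifP => hij.
    * rewrite evw_aC //; try lia. apply: cP_aC1 => //. apply: ev_lt => //; lia. exact: ev_ltT.
    * have [ha he] := hadj isT. ev_rw. rewrite he.
      apply: cP_aC2 => //. apply: ev_le => //; lia.
-
  rewrite /Pok; cbv beta iota; rewrite evw1B => hi. have hi1 : 1 <= ev i by apply: ev_pos; lia.
  have hiT := ev_ltT hi.
  case: kx => [|[|kx]]; rewrite /Fok /phiA /needadj /adjpos; cbv beta iota;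
    move=> hx /(_ isT) [ha he].
  + move: hx => /eqP ->. rewrite evw1A. ev_rw. rewrite he. exact: cP_bA.
  + move: hx => /eqP ->. rewrite evw1B. ev_rw. rewrite he. exact: cP_bB.
  + move: hx => /andP [/eqP hr hj]. rewrite evw1C //.
    have hj1 : 1 <= ev j by apply: ev_pos; lia.
    case: ifP => hij.
    * rewrite evw_aC //; try lia. apply: cP_bC1 => //. apply: ev_lt => //; lia. exact: ev_ltT.
    * ev_rw. rewrite he. apply: cP_bC2 => //. apply: ev_le => //; lia.
-
  rewrite /Pok; cbv beta iota => /andP [hiq hq]. rewrite evw1Cg //.
  have hi1 : 1 <= ev i by apply: ev_pos; lia.
  have hqT := ev_ltT hq.
  have hiq' := ev_lt Hs hiq (_ : q < size ix).
  case: kx => [|[|kx]]; rewrite /Fok /phiA /needadj /adjpos; cbv beta iota.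
  + move=> /eqP -> _. rewrite evw1A evw_aa. apply: cP_CA => //; lia.
  + move=> /eqP -> _. rewrite evw1B evw_ab. apply: cP_CB => //; lia.
  + move=> /andP [/eqP hr hj] hadj. rewrite evw1C //.
    have hj1 : 1 <= ev j by apply: ev_pos; lia.
    case: ifP => hc.
    * rewrite evw_aC //; try lia. apply: cP_CC1 => //; try lia; try exact: ev_ltT.
      case/orP: hc => hc; apply/orP; [left; apply: ev_lt => //; lia | right; apply: ev_le => //; lia].
    * move/negbT: hc; rewrite negb_or => /andP [hjq hij]. have {hjq}hjq : j <= q by lia. have {hij}hij : i < j by lia.
      have [ha he] : adjP q by apply: hadj; rewrite hij hjq.
      ev_rw. rewrite he.
      apply: cP_CC2 => //. apply: ev_lt => //; lia. apply: ev_le => //; lia.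
Qed.
End Push.

Definition ainvl (y : alet * bool) : alet * bool := (y.1, ~~ y.2).
Fixpoint ared (w : aword) : aword :=
  match w with
  | [::] => [::]
  | y :: w' => match ared w' with
               | z :: r => if z == ainvl y then r else y :: z :: r
               | [::] => [:: y]
               end
  end.

Definition pushok (adjs : seq nat) (g : alet) (F : aword) : bool :=
  all (fun z => needadj g z.1 ==> (adjpos g \in adjs)) F.

Definition step T adjs (st : aword * aword * bool) (y : alet * bool) :=
  let: (P, F, ok) := st in
  if Fok T y.1 then (P, ared (F ++ [:: y]), ok)
  else if y.2 then
    let F' := ared (wmapA (psiA T y.1) F) in
    (rcons P y, F', [&& ok, Pok T y.1, all (fun z => Fok T z.1) F', pushok adjs y.1 F'
                      & ared (wmapA (phiA T y.1) F') == ared F])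
  else
    let F' := ared (wmapA (phiA T y.1) F) in
    (rcons P y, F', [&& ok, Pok T y.1, all (fun z => Fok T z.1) F' & pushok adjs y.1 F]).

Definition nf T adjs (w : aword) := foldl (step T adjs) ([::], [::], true) w.

Definition sAl T (x : alet) : aword :=
  let: (k, i, q) := x in
  match k with
  | 0 => if i == T.-1 then aa i ++ aa T else aa i
  | 1 => if i == T.-1 then ab T ++ ab i else ab i
  | _ => if q == T.-1 then [:: (x, false)] ++ aC i T ++ awinv (aC T.-1 T) else [:: (x, false)]
  end.
Definition sA T (w : aword) := wmapA (sAl T) w.

Definition check T adjs (lA rA : aword) : bool :=
  let: (P1, F1, ok1) := nf T adjs (sA T lA) in
  let: (P2, F2, ok2) := nf T adjs (sA T rA) in
  [&& ok1, ok2, P1 == lA, P2 == rA, F1 == F2 & all (fun p => Pok T p.1) (lA ++ rA)].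

Definition AdjL (ix : seq nat) (adjs : seq nat) : Prop :=
  all (fun p => p.+1 < size ix) adjs /\
  foldr (fun p P => nth 0 ix p.+1 = (nth 0 ix p).+1 /\ P) True adjs.

Section Sound.
Variable ix : seq nat.
Hypothesis Hs : sorted ltn ix.
Hypothesis Hh : 0 < nth 0 ix 0.
Hypothesis HS : 1 < size ix.
Variable adjs : seq nat.
Hypothesis Hadj : AdjL ix adjs.
Local Notation T := (size ix).-1.
Local Notation ev := (ev ix).
Local Notation evw := (evw ix).
Local Notation m := (ev T).

Lemma adjs_ok p : p \in adjs -> adjP ix p.
Proof.
case: Hadj => H1 H2. elim: adjs H1 H2 => [|q s IH] //= /andP [h1 h2] [h3 h4].
rewrite inE => /orP [/eqP ->|hp]; first by split.
exact: IH.
Qed.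

Lemma ared_sound mm w : eqv mm (evw w) (evw (ared w)).
Proof.
elim: w => [|y w IH] /=; first exact: eqv_refl.
apply: eqv_trans (_ : eqv mm ((evL ix y.1, y.2) :: evw (ared w)) _).
  exact: (eqv_catl [:: _] IH).
case: (ared w) => [|z r] //=; first exact: eqv_refl.
case: eqP => [->|_]; last exact: eqv_refl.
rewrite /ainvl /=. exact: (eqv_ctx [::] (evw r) (eqv_cancel mm (evL ix y.1) y.2)).
Qed.

Lemma ared_all (Q : pred (alet * bool)) w : all Q w -> all Q (ared w).
Proof.
elim: w => [|y w IH] //= /andP [hy hw]. have := IH hw.
case: (ared w) => [|z r] /=; first by rewrite hy.
move=> /andP [hz hr]. case: eqP => _ //=. by rewrite hy hz hr.
Qed.

Lemma evw_inv1 g : evw [:: (g, true)] = winv (evw [:: (g, false)]).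
Proof. by []. Qed.

Lemma pushW g F : Pok T g -> all (fun z => Fok T z.1) F -> pushok adjs g F ->
  eqv m (evw F ++ evw [:: (g, false)]) (evw [:: (g, false)] ++ evw (wmapA (phiA T g) F)).
Proof.
move=> hg. elim: F => [|[x e] F IH] /=.
  move=> _ _; exact: eqv_refl.
move=> /andP [hx hF] /andP [hn hpF].
have H1 : eqv m (evw [:: (x, false)] ++ evw [:: (g, false)])
                (evw [:: (g, false)] ++ evw (phiA T g x)).
  apply: (pushA Hs Hh HS hg hx) => hn'. apply: adjs_ok. by rewrite hn' in hn.
rewrite /wmapA /= evw_cat -/(wmapA _ _).
apply: eqv_trans (_ : eqv m ((evL ix x, e) :: (evw [:: (g, false)] ++ evw (wmapA (phiA T g) F))) _).
  exact: (eqv_catl [:: _] (IH hF hpF)).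
rewrite -[(evL ix x, e) :: _]/([:: (evL ix x, e)] ++ _) catA -[(evL ix g, false) :: _]/([:: (evL ix g, false)] ++ _) catA.
apply: eqv_catr.
case: e.
- rewrite evw_awinv. have := push_inv H1. by rewrite -evw_inv1.
- exact: H1.
Qed.

Lemma step_sound st y :
  let: (P, F, ok) := st in
  let: (P', F', ok') := step T adjs st y in
  all (fun z => Fok T z.1) F -> ok' ->
  [/\ ok, all (fun z => Fok T z.1) F' &
      eqv m (evw P ++ evw F ++ evw [:: y]) (evw P' ++ evw F')].
Proof.
case: st => [[P F] ok]. case: y => [x e] /=.
case: ifP => hFx.
- move=> hF hok; split => //.
    apply: ared_all. by rewrite all_cat hF /= hFx.
  apply: eqv_catl. rewrite -[[:: (evL ix x, e)]]/(evw [:: (x, e)]) -evw_cat. exact: ared_sound.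
case: e => hF.
- move=> /and5P [hok hg hF' hp heq]; split => //.
  rewrite -cats1 evw_cat -catA; apply: eqv_catl.
  have H1 := pushW hg hF' hp.
  have H2 : eqv m (evw (wmapA (phiA T x) (ared (wmapA (psiA T x) F)))) (evw F).
    apply: eqv_trans (ared_sound _ _) _. rewrite (eqP heq). apply: eqv_sym; exact: ared_sound.
  have H3 := eqv_trans H1 (eqv_catl _ H2).
  have := push_back H3. by rewrite -evw_inv1.
- move=> /and4P [hok hg hF' hp]; split => //.
  rewrite -cats1 evw_cat -catA; apply: eqv_catl.
  apply: eqv_trans (pushW hg hF hp) _. apply: eqv_catl; exact: ared_sound.
Qed.

Lemma step_ok st y : (step T adjs st y).2 -> st.2.
Proof.
case: st => [[P F] ok]; case: y => [x e] /=.
case: ifP => _ //; case: e => /=; [by case/and5P | by case/and4P].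
Qed.

Lemma fold_ok w st : (foldl (step T adjs) st w).2 -> st.2.
Proof. elim: w st => [|y w IH] st //= h. exact: step_ok (IH _ h). Qed.

Lemma nf_fold w st :
  let: (P, F, ok) := st in
  let: (P', F', ok') := foldl (step T adjs) st w in
  all (fun z => Fok T z.1) F -> ok' ->
  eqv m (evw P ++ evw F ++ evw w) (evw P' ++ evw F').
Proof.
elim: w st => [|y w IH] [[P F] ok].
  by rewrite [foldl _ _ [::]]/= => _ _; rewrite cats0; exact: eqv_refl.
rewrite (_ : foldl _ _ (y :: w) = foldl (step T adjs) (step T adjs (P, F, ok) y) w) //.
case E: (step T adjs (P, F, ok) y) => [[P1 F1] ok1].
have Hst := step_sound (P, F, ok) y. rewrite E in Hst.
have hfo := @fold_ok w (P1, F1, ok1).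
have := IH (P1, F1, ok1).
case: (foldl (step T adjs) (P1, F1, ok1) w) hfo => [[P2 F2] ok2] hfo IH2 hF hok2.
have hok1 : ok1 by exact: (hfo hok2).
have [_ hF1 H] := Hst hF hok1.
apply: eqv_trans (IH2 hF1 hok2).
rewrite -[y :: w]/([:: y] ++ w) evw_cat !catA. apply: eqv_catr.
by rewrite -!catA.
Qed.

Lemma nf_sound w :
  let: (P, F, ok) := nf T adjs w in ok -> eqv m (evw w) (evw P ++ evw F).
Proof.
have := nf_fold w ([::], [::], true). rewrite /nf.
case: (foldl _ _ _) => [[P F] ok] H hok. exact: H.
Qed.

Lemma sA_sound n w : all (fun p => Pok T p.1) w -> ev T.-1 = n -> ev T = n.+1 ->
  evw (sA T w) = s_word n (evw w).
Proof.
move=> hw hn hN. rewrite /sA /s_word.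
apply: (evw_wmapA (Q := Pok T)) => //.
case=> [[k i] q]. have hT : T < size ix by lia.
have hT1 : T.-1 < size ix by lia.
case: k => [|[|k]]; rewrite /Pok /sAl /evL /=; cbv beta iota.
- move=> hi. rewrite -hn ev_eq //; try lia. case: eqP => [->|_] //.
  by rewrite /= /evL /= hN hn.
- move=> hi. rewrite -hn ev_eq //; try lia. case: eqP => [->|_] //.
  by rewrite /= /evL /= hN hn.
- move=> /andP [hiq hq]. rewrite -hn ev_eq //; try lia.
  have hlt : ev i < ev q by apply: ev_lt => //; lia.
  case: eqP => [hqe|_].
  + rewrite -cat1s !evw_cat evw_awinv !evw_aC //; try lia.
    have hin : ev i != n by rewrite hqe hn in hlt; lia.
    by rewrite hN hn hqe /evw /= /evL /= hn (C_ne hin).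
  + rewrite /evw /= /evL /= C_ne //; lia.
Qed.
End Sound.

Lemma case_ok ix adjs lA rA n l r :
  sorted ltn ix -> 0 < nth 0 ix 0 -> 1 < size ix -> AdjL ix adjs ->
  nth 0 ix (size ix).-2 = n -> nth 0 ix (size ix).-1 = n.+1 ->
  check (size ix).-1 adjs lA rA ->
  l = evw ix lA -> r = evw ix rA -> eqv n.+1 l r ->
  eqv n.+1 (s_word n l) (s_word n r).
Proof.
move=> Hs Hh HS Hadj hn hN. rewrite /check.
have := nf_sound Hs Hh HS Hadj (sA (size ix).-1 lA).
have := nf_sound Hs Hh HS Hadj (sA (size ix).-1 rA).
case: (nf _ _ (sA _ lA)) => [[P1 F1] ok1].
case: (nf _ _ (sA _ rA)) => [[P2 F2] ok2].
move=> H2 H1 /and5P [hok1 hok2 /eqP hP1 /eqP hP2 /andP [/eqP hF hall]] -> -> Hlr.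
move: hall; rewrite all_cat => /andP [hl hr].
have hn' : ev ix (size ix).-1.-1 = n by rewrite /ev -hn; congr nth; lia.
rewrite -(sA_sound Hs Hh HS hl hn' hN) -(sA_sound Hs Hh HS hr hn' hN).
rewrite /ev -hN in H1 H2 Hlr *.
apply: eqv_trans (H1 hok1) _. apply: eqv_sym. apply: eqv_trans (H2 hok2) _.
rewrite hP1 hP2 hF. apply: eqv_catr. exact: eqv_sym.
Qed.

Definition aR1 i j : aword * aword := (aa i ++ aa j, aa j ++ aa i).
Definition aR2 i i1 j : aword * aword := (awinv (aa i) ++ ab j ++ aa i,
  ab j ++ aa j ++ awinv (aC i j) ++ aC i1 j ++ awinv (aa j)).
Definition aR3a i j k : aword * aword := (awinv (aa i) ++ aC j k ++ aa i, aC j k).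
Definition aR3b i i1 j k : aword * aword := (awinv (aa i) ++ aC j k ++ aa i,
  aa k ++ awinv (aC i1 k) ++ aC i k ++ awinv (aa k) ++ aC j k ++ awinv (aC i k) ++ aC i1 k).
Definition aR4a i l j k : aword * aword := (awinv (aC i l) ++ aC j k ++ aC i l, aC j k).
Definition aR4b i l l1 j k : aword * aword := (awinv (aC i l) ++ aC j k ++ aC i l,
  aC i k ++ awinv (aC l1 k) ++ aC l k ++ awinv (aC i k) ++ aC j k ++ awinv (aC l k) ++ aC l1 k).
Definition aR6 i i1 j : aword * aword := (ab j ++ ab i, ab i ++ ab j ++ aC i j ++ awinv (aC i1 j)).
Definition aR7 i i1 j : aword * aword := (awinv (ab i) ++ aa j ++ ab i,
  aa j ++ ab j ++ awinv (aC i j ++ awinv (aC i1 j)) ++ awinv (ab j)).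
Definition aR8a i j k : aword * aword := (awinv (ab i) ++ aC j k ++ ab i, aC j k).
Definition aR8b i i1 j k : aword * aword := (awinv (ab i) ++ aC j k ++ ab i,
  aC i1 k ++ awinv (aC i k) ++ aC j k ++ ab k ++ awinv (aC i k ++ awinv (aC i1 k)) ++ awinv (ab k)).

Ltac res_if := repeat match goal with |- context [if ?c then _ else _] =>
   first [ rewrite (_ : c = false); last by lia | rewrite (_ : c = true); last by lia ] end.

Ltac evw_eq := rewrite /evw /evL /C /=; res_if; rewrite /=; reflexivity.

Ltac do_case ix adjs AR :=
  apply: (case_ok (ix := ix) (adjs := adjs) (lA := AR.1) (rA := AR.2));
  [ rewrite /=; lia | rewrite /=; lia | by [] | split; [by [] | rewrite /=; repeat split; lia]
  | by [] | by [] | vm_compute; reflexivity | evw_eq | evw_eq | ].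

Lemma test n i : 1 <= i -> i.+1 < n ->
  eqv n.+1 (s_word n (winv (a i) ++ b n ++ a i))
           (s_word n (b n ++ a n ++ winv (C i n) ++ C i.+1 n ++ winv (a n))).
Proof.
move=> h1 h2.
do_case [:: i; i.+1; n; n.+1] [:: 0; 2] (aR2 0 1 2).
apply: eqv_rel; apply: R2; lia.
Qed.

Lemma s_a n i : (i == n) = false -> wmap (s_letter n) (a i) = a i.
Proof. by move=> h; rewrite /wmap /= h cats0. Qed.
Lemma s_b n i : (i == n) = false -> wmap (s_letter n) (b i) = b i.
Proof. by move=> h; rewrite /wmap /= h cats0. Qed.
Lemma s_C n i j : (j == n) = false -> wmap (s_letter n) (C i j) = C i j.
Proof. move=> h; rewrite /C; case: eqP => [_|ne] //. by rewrite /wmap /= h cats0 /C (introF eqP ne). Qed.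

Ltac sid := rewrite /s_word !(wmap_cat, wmap_winv) ?s_a ?s_b ?s_C; try lia.

Lemma abs_eq ix adjs w1 w2 :
  sorted ltn ix -> 0 < nth 0 ix 0 -> 1 < size ix -> AdjL ix adjs ->
  (let: (P1, F1, ok1) := nf (size ix).-1 adjs w1 in
   let: (P2, F2, ok2) := nf (size ix).-1 adjs w2 in
   [&& ok1, ok2, P1 == P2 & F1 == F2]) ->
  eqv (nth 0 ix (size ix).-1) (evw ix w1) (evw ix w2).
Proof.
move=> Hs Hh HS Hadj.
have := nf_sound Hs Hh HS Hadj w1. have := nf_sound Hs Hh HS Hadj w2.
case: (nf _ _ w1) => [[P1 F1] ok1]; case: (nf _ _ w2) => [[P2 F2] ok2].
move=> H2 H1 /and4P [h1 h2 /eqP e1 /eqP e2].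
apply: eqv_trans (H1 h1) _. rewrite e1 e2. apply: eqv_sym. exact: H2.
Qed.


Definition f5 i (j : nat) : word := C i j ++ winv (C i.+1 j).

Lemma s_f5 n i j : j < n -> wmap (s_letter n) (f5 i j) = f5 i j.
Proof. move=> h. rewrite /f5 wmap_cat wmap_winv !s_C //; lia. Qed.

Lemma r5_lt n i : 1 <= i -> i < n ->
  eqv n.+1 (s_word n (flatten [seq C i j ++ winv (C i.+1 j) | j <- iota i.+1 (n - i)]))
           (s_word n (b i ++ C 1 i ++ winv (a i) ++ winv (b i) ++ winv (a i))).
Proof.
move=> h1 h2.
have H : eqv n.+1 (flatten [seq f5 i j | j <- iota i.+1 (n.+1 - i)])
   (b i ++ C 1 i ++ winv (a i) ++ winv (b i) ++ winv (a i)).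
  apply: eqv_rel; apply: R5; lia.
rewrite -/(f5 i).
have hk : n - i = (n - i).-1 + 1 by lia.
have hk2 : n.+1 - i = (n - i).-1 + 2 by lia.
rewrite hk iotaD map_cat flatten_cat.
rewrite hk2 iotaD map_cat flatten_cat in H.
have hn : i.+1 + (n - i).-1 = n by lia.
rewrite hn (_ : flatten [seq f5 i j | j <- iota n 1] = f5 i n); last by rewrite /= cats0.
rewrite hn (_ : flatten [seq f5 i j | j <- iota n 2] = f5 i n ++ f5 i n.+1) in H;
  last by rewrite /= cats0.
rewrite {2}/s_word !(wmap_cat, wmap_winv) ?s_a ?s_b ?s_C; try lia.
have E : map (wmap (s_letter n)) [seq f5 i j | j <- iota i.+1 (n - i).-1] =
          [seq f5 i j | j <- iota i.+1 (n - i).-1].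
  rewrite -map_comp; apply/eq_in_map => j; rewrite mem_iota => hj /=; apply: s_f5; lia.
rewrite /s_word wmap_cat wmap_flatten E.
apply: eqv_trans H. apply: eqv_catl.
case: (ltngtP i.+1 n) => hi; last first.
- have hC : C i n = [:: (LC i n, false)] by apply: C_ne; lia.
  rewrite /f5 hi C_eq winv_nil cats0 hC /wmap /= eqxx cats0 hC. exact: eqv_refl.
- lia.
- pose ix := [:: i; i.+1; n; n.+1].
  have Hs : sorted ltn ix by rewrite /=; lia.
  have Hh : 0 < nth 0 ix 0 by [].
  have HS : 1 < size ix by [].
  have Ha : AdjL ix [:: 2] by split; [by [] | rewrite /=; repeat split].
  have := abs_eq Hs Hh HS Ha (w1 := sA 3 (aC 0 2 ++ awinv (aC 1 2)))
          (w2 := aC 0 2 ++ awinv (aC 1 2) ++ aC 0 3 ++ awinv (aC 1 3)).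
  move=> /(_ (_ : _)) H1. have {H1} H1 := H1 (ltac:(vm_compute; reflexivity)).
  rewrite (sA_sound Hs Hh HS (n := n)) in H1; [| by [] | by [] | by []].
  have E1 : evw ix (aC 0 2 ++ awinv (aC 1 2)) = f5 i n by rewrite /f5; evw_eq.
  have E2 : evw ix (aC 0 2 ++ awinv (aC 1 2) ++ aC 0 3 ++ awinv (aC 1 3)) = f5 i n ++ f5 i n.+1.
    by rewrite /f5; evw_eq.
  rewrite E1 E2 in H1. exact: H1.
Qed.


Definition r5w (n : nat) : word := b n ++ C 1 n ++ winv (a n) ++ winv (b n) ++ winv (a n).

Lemma r5_tail n ix adjs rA FA : 1 <= n ->
  sorted ltn ix -> 0 < nth 0 ix 0 -> 1 < size ix -> AdjL ix adjs ->
  nth 0 ix (size ix).-2 = n -> nth 0 ix (size ix).-1 = n.+1 ->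
  all (fun p => Pok (size ix).-1 p.1) rA ->
  nf (size ix).-1 adjs (sA (size ix).-1 rA) = (rA, FA, true) ->
  evw ix rA = r5w n ->
  evw ix FA = r5w n.+1 ++ winv (C n n.+1) ->
  eqv n.+1 [::] (s_word n (r5w n)).
Proof.
move=> hn1 Hs Hh HS Ha hn hN hall Hc E1 E2.
have := nf_sound Hs Hh HS Ha (sA (size ix).-1 rA). rewrite Hc => /(_ isT).
have hn' : ev ix (size ix).-1.-1 = n by rewrite /ev -hn; congr nth; lia.
rewrite (sA_sound Hs Hh HS hall hn' hN) E1 E2 /ev hN => H.
apply: eqv_sym; apply: eqv_trans H _.
have H1 : eqv n.+1 (r5w n) (C n n.+1).
  have H0 : eqv n.+1 (flatten [seq C n j ++ winv (C n.+1 j) | j <- iota n.+1 (n.+1 - n)]) (r5w n).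
    by apply: eqv_rel; apply: R5; lia.
  rewrite subSnn [flatten _]/= C_eq winv_nil !cats0 in H0. exact: eqv_sym.
have H2 : eqv n.+1 (r5w n.+1) [::].
  have H0 : eqv n.+1 (flatten [seq C n.+1 j ++ winv (C n.+2 j) | j <- iota n.+2 (n.+1 - n.+1)])
     (r5w n.+1) by apply: eqv_rel; apply: R5; lia.
  rewrite subnn [flatten _]/= in H0. exact: eqv_sym.
apply: eqv_trans (eqv_catr _ H1) _.
apply: eqv_trans (eqv_catl _ (eqv_catr _ H2)) _.
exact: eqv_invr.
Qed.

Lemma r5_n n : 1 <= n ->
  eqv n.+1 (s_word n (flatten [seq C n j ++ winv (C n.+1 j) | j <- iota n.+1 (n - n)]))
           (s_word n (b n ++ C 1 n ++ winv (a n) ++ winv (b n) ++ winv (a n))).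
Proof.
move=> h1. rewrite subnn /= -/(r5w n).
case: (ltngtP 1 n) => hn; last first.
- apply: (r5_tail (ix := [:: n; n.+1]) (adjs := [:: 0])
     (rA := ab 0 ++ aC 0 0 ++ awinv (aa 0) ++ awinv (ab 0) ++ awinv (aa 0))
     (FA := [:: (1, 1, 0, false); (2, 0, 1, false); (0, 1, 0, true);
            (1, 1, 0, true); (0, 1, 0, true); (2, 0, 1, true)])).
  + done.
  + rewrite /=; lia.
  + rewrite /=; lia.
  + done.
  + split; [by [] | rewrite /=; repeat split].
  + done.
  + done.
  + done.
  + by vm_compute.
  + rewrite /r5w -hn; evw_eq.
  + rewrite /r5w -hn; evw_eq.
- lia.
- apply: (r5_tail (ix := [:: 1; n; n.+1]) (adjs := [:: 1])
     (rA := ab 1 ++ aC 0 1 ++ awinv (aa 1) ++ awinv (ab 1) ++ awinv (aa 1))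
     (FA := [:: (1, 2, 0, false); (2, 0, 2, false); (0, 2, 0, true);
            (1, 2, 0, true); (0, 2, 0, true); (2, 1, 2, true)])).
  + done.
  + rewrite /=; lia.
  + rewrite /=; lia.
  + done.
  + split; [by [] | rewrite /=; repeat split].
  + done.
  + done.
  + done.
  + by vm_compute.
  + rewrite /r5w; evw_eq.
  + rewrite /r5w; evw_eq.
Qed.

Ltac fin R := apply: eqv_rel; apply: R; lia.

Lemma rel_case n w w' : 1 <= n -> prel n w w' -> eqv n.+1 (s_word n w) (s_word n w').
Proof.
move=> hn1. case.
-
  move=> i j h1 h2 h3. case: (ltngtP j n) => hj; [sid; fin R1 | lia | subst j].
  do_case [:: i; n; n.+1] (@nil nat) (aR1 0 1). fin R1.
-
  move=> i j h1 h2 h3. case: (ltngtP j n) => hj; [sid; fin R2 | lia | subst j].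
  case: (ltngtP i.+1 n) => hi; [| lia |].
  + do_case [:: i; i.+1; n; n.+1] [:: 0; 2] (aR2 0 1 2). fin R2.
  + do_case [:: i; n; n.+1] [:: 0; 1] (aR2 0 1 1). fin R2.
-
  move=> i j k /andP [h1 h1'] h2 h3 h4 hc.
  case: (ltngtP k n) => hk; [| lia | subst k].
  + case: (ltngtP i n) => hi; [sid; fin R3a | lia | subst i].
    do_case [:: j; k; n; n.+1] [:: 2] (aR3a 2 0 1). fin R3a.
  + have hij : i < j by lia.
    case: (ltngtP i.+1 j) => hi; [| lia |].
    * do_case [:: i; i.+1; j; n; n.+1] [:: 0; 3] (aR3a 0 2 3). fin R3a.
    * do_case [:: i; j; n; n.+1] [:: 0; 2] (aR3a 0 1 2). fin R3a.
-
  move=> i j k h1 h2 h3 h4.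
  case: (ltngtP k n) => hk; [sid; fin R3b | lia | subst k].
  case: (ltngtP j i) => hji; [| lia | subst j].
  + case: (ltngtP i.+1 n) => hi; [| lia |].
    * do_case [:: j; i; i.+1; n; n.+1] [:: 1; 3] (aR3b 1 2 0 3). fin R3b.
    * do_case [:: j; i; n; n.+1] [:: 1; 2] (aR3b 1 2 0 2). fin R3b.
  + case: (ltngtP i.+1 n) => hi; [| lia |].
    * do_case [:: i; i.+1; n; n.+1] [:: 0; 2] (aR3b 0 1 0 2). fin R3b.
    * do_case [:: i; n; n.+1] [:: 0; 1] (aR3b 0 1 0 1). fin R3b.
-
  move=> i l j k h1 h2 h3 h4 h5 hc.
  case: (ltngtP k n) => hk; [sid; fin R4a | lia | subst k].
  case: (ltnP l j) => hlj.
  + do_case [:: i; l; j; n; n.+1] [:: 3] (aR4a 0 1 2 3). fin R4a.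
  + case: (ltngtP j i) => hji; [| lia | subst j].
    * do_case [:: j; i; l; n; n.+1] [:: 3] (aR4a 1 2 0 3). fin R4a.
    * do_case [:: i; l; n; n.+1] [:: 2] (aR4a 0 1 0 2). fin R4a.
-
  move=> i l j k h1 h2 h3 h4 h5.
  case: (ltngtP k n) => hk; [sid; fin R4b | lia | subst k].
  case: (ltngtP j l) => hjl; [| lia | subst j].
  + case: (ltngtP l.+1 n) => hl; [| lia |].
    * do_case [:: i; j; l; l.+1; n; n.+1] [:: 2; 4] (aR4b 0 2 3 1 4). fin R4b.
    * do_case [:: i; j; l; n; n.+1] [:: 2; 3] (aR4b 0 2 3 1 3). fin R4b.
  + case: (ltngtP l.+1 n) => hl; [| lia |].
    * do_case [:: i; l; l.+1; n; n.+1] [:: 1; 3] (aR4b 0 1 2 1 3). fin R4b.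
    * do_case [:: i; l; n; n.+1] [:: 1; 2] (aR4b 0 1 2 1 2). fin R4b.
-
  move=> i /andP [h1 h2].
  case: (ltngtP i n) => hi; [exact: r5_lt | lia | subst i; exact: r5_n].
-
  move=> i j h1 h2 h3. case: (ltngtP j n) => hj; [sid; fin R6 | lia | subst j].
  case: (ltngtP i.+1 n) => hi; [| lia |].
  + do_case [:: i; i.+1; n; n.+1] [:: 0; 2] (aR6 0 1 2). fin R6.
  + do_case [:: i; n; n.+1] [:: 0; 1] (aR6 0 1 1). fin R6.
-
  move=> i j h1 h2 h3. case: (ltngtP j n) => hj; [sid; fin R7 | lia | subst j].
  case: (ltngtP i.+1 n) => hi; [| lia |].
  + do_case [:: i; i.+1; n; n.+1] [:: 0; 2] (aR7 0 1 2). fin R7.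
  + do_case [:: i; n; n.+1] [:: 0; 1] (aR7 0 1 1). fin R7.
-
  move=> i j k /andP [h1 h1'] h2 h3 h4 hc.
  case: (ltngtP k n) => hk; [| lia | subst k].
  + case: (ltngtP i n) => hi; [sid; fin R8a | lia | subst i].
    do_case [:: j; k; n; n.+1] [:: 2] (aR8a 2 0 1). fin R8a.
  + have hij : i < j by lia.
    case: (ltngtP i.+1 j) => hi; [| lia |].
    * do_case [:: i; i.+1; j; n; n.+1] [:: 0; 3] (aR8a 0 2 3). fin R8a.
    * do_case [:: i; j; n; n.+1] [:: 0; 2] (aR8a 0 1 2). fin R8a.
-
  move=> i j k h1 h2 h3 h4.
  case: (ltngtP k n) => hk; [sid; fin R8b | lia | subst k].
  case: (ltngtP j i) => hji; [| lia | subst j].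
  + case: (ltngtP i.+1 n) => hi; [| lia |].
    * do_case [:: j; i; i.+1; n; n.+1] [:: 1; 3] (aR8b 1 2 0 3). fin R8b.
    * do_case [:: j; i; n; n.+1] [:: 1; 2] (aR8b 1 2 0 2). fin R8b.
  + case: (ltngtP i.+1 n) => hi; [| lia |].
    * do_case [:: i; i.+1; n; n.+1] [:: 0; 2] (aR8b 0 1 0 2). fin R8b.
    * do_case [:: i; n; n.+1] [:: 0; 1] (aR8b 0 1 0 1). fin R8b.
Qed.

Lemma s_resp n w w' : 1 <= n -> eqv n w w' -> eqv n.+1 (s_word n w) (s_word n w').
Proof.
move=> hn. elim=> {w w'}.
- move=> w; exact: eqv_refl.
- move=> w w' _ IH; exact: eqv_sym.
- move=> w1 w2 w3 _ IH1 _ IH2; exact: eqv_trans IH1 IH2.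
- move=> u v w w' _ IH. rewrite /s_word !wmap_cat. exact: eqv_ctx.
- move=> x e. exact: eqv_wmap_cancel.
- move=> w w' H. exact: rel_case.
Qed.

Theorem proposition5p1 (n : nat) : 1 <= n ->
  (forall w w' : word, valid_word n w -> valid_word n w' ->
     eqv n w w' -> eqv n.+1 (s_word n w) (s_word n w')) /\
  (forall w : word, valid_word n w -> eqv n (p_word n (s_word n w)) w).
Proof.
move=> hn. split.
- move=> w w' _ _. exact: s_resp.
- exact: part2.
Qed.
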